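(* For the propositional CNF formula $MAP_n^1$ (defined in the context), every resolution refutation of $MAP_n^1$ has size exponential in $n$.
   Context: MAP planning domain. Fix $n\ge 2$. The map is an undirected graph with $3n-3$ nodes: a centre $L^0$; a path (branch 1) $L^0 - L_1^1 - L_1^2 - \dots - L_1^{2n-3}$; and, for each $i=2,\dots,n$, a single node $L_i^1$ adjacent to $L^0$. Facts are $at\text{-}x$ and $visited\text{-}x$ for nodes $x$. For every edge $\{x,y\}$ and both orientations there is an action $move\text{-}x\text{-}y$ with precondition $\{at\text{-}x\}$, add effects $\{at\text{-}y, visited\text{-}y\}$ and delete effect $\{at\text{-}x\}$. The initial state is $\{at\text{-}L^0\}$. For $k\in\{1,3,\dots,2n-3\}$ the goal of task $MAP_n^k$ is: for $k=1$, $\{visited\text{-}L_1^1,\dots,visited\text{-}L_n^1\}$; each increase of $k$ by 2 moves the branch-1 goal two steps further out along branch 1 (the goal becomes $visited\text{-}L_1^k$) and drops one of the goals $visited\text{-}L_i^1$, $i\ge 2$; for $k=2n-3$ the goal is $\{visited\text{-}L_1^{2n-3}, visited\text{-}L_2^1\}$. The CNF formula $MAP_n^k$ is the standard Graphplan-based (Blackbox-style) SAT encoding of task $MAP_n^k$ with $T=2n-2$ time steps (one fewer than the length $2n-1$ of a shortest plan, so the formula is unsatisfiable). Build the Graphplan planning graph from the initial state, with a NOOP action $NOOP\text{-}p$ (precondition $\{p\}$, add $\{p\}$) for every fact $p$. For each time step $t=1,\dots,T$ there is a Boolean variable $a(t)$ for every action $a$ (including NOOPs) present in action layer $t$ of the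 planning graph. Clauses: (i) goal clauses: for each goal fact $g$, the clause $\{a(T): g\in add(a)\}$; (ii) precondition clauses: for each variable $a(t)$ with $t\ge 2$ and each $p\in pre(a)$, the clause $\{\neg a(t)\}\cup\{a'(t-1): p\in add(a')\}$; (iii) mutex clauses $\{\neg a(t),\neg a'(t)\}$ for each pair of actions that Graphplan marks mutually exclusive at layer $t$ (interference: one deletes a precondition or add effect of the other; or competing needs: mutually exclusive preconditions). In this encoding any two move actions at the same time step are mutually exclusive. A resolution refutation is a derivation of the empty clause by the resolution rule; its size is the number of clauses in it. *)

(* Defs.v *)
From mathcomp Require Import all_boot.
Set Implicit Arguments.
Unset Strict Implicit.
Unset Printing Implicit Defensive.

Section Resolution.
Variable V : finType.
(* a literal is a pair (variable, polarity); true = positive literal *)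
Definition lit := (V * bool)%type.
Definition clause := {set lit}.

Definition resolvent (C D E : clause) : bool :=
  [exists v : V, [&& (v, true) \in C, (v, false) \in D &
                    E == (C :\ (v, true)) :|: (D :\ (v, false))]].

Definition refutation (Phi : {set clause}) (pi : seq clause) : bool :=
  [&& pi != [::], last set0 pi == set0 &
   [forall i : 'I_(size pi),
      (nth set0 pi i \in Phi) ||
      [exists j : 'I_i, exists k : 'I_i,
         resolvent (nth set0 pi j) (nth set0 pi k) (nth set0 pi i)]]].
End Resolution.

Section Graphplan.
Variables (F B : finType) (pre add del : B -> {set F}).

(* actions of the planning graph: base actions and NOOP-p for each fact p *)
Definition Act := (B + F)%type.
Definition preX (a : Act) : {set F} :=
  match a with inl b => pre b | inr p => [set p] end.
Definition addX (a : Act) : {set F} :=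
  match a with inl b => add b | inr p => [set p] end.
Definition delX (a : Act) : {set F} :=
  match a with inl b => del b | inr _ => set0 end.

(* a fact layer: the set of facts present and the set of mutex fact pairs *)
Definition layerT := ({set F} * {set (F * F)})%type.

Definition actions_at (L : layerT) : {set Act} :=
  [set a | (preX a \subset L.1) &&
           [forall p in preX a, forall q in preX a, (p, q) \notin L.2]].

Definition interferes (a b : Act) : bool :=
  [exists p in delX a, (p \in preX b) || (p \in addX b)].

Definition amutex (L : layerT) (a b : Act) : bool :=
  (a != b) && [|| interferes a b, interferes b a |
                 [exists p in preX a, exists q in preX b, (p, q) \in L.2]].

Definition next_layer (L : layerT) : layerT :=
  let As := actions_at L in
  let Fs := \bigcup_(a in As) addX a in
  (Fs, [set pq : F * F | [&& pq.1 \in Fs, pq.2 \in Fs, pq.1 != pq.2 &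
         [forall a in As, forall b in As,
            (pq.1 \in addX a) ==> (pq.2 \in addX b) ==> amutex L a b]]]).

Variable init : {set F}.

Definition fact_layer (t : nat) : layerT := iter t next_layer (init, set0).
Definition act_layer (t : nat) : {set Act} := actions_at (fact_layer t.-1).
Definition act_mutex (t : nat) (a b : Act) : bool := amutex (fact_layer t.-1) a b.

Variables (goal : {set F}) (T : nat).

(* propositional variables a(t), t = 1..T (time 0 is never used) *)
Definition pvar := ('I_T.+1 * Act)%type.

Definition goal_clauses : {set clause pvar} :=
  [set [set ((ord_max, a), true) | a in act_layer T & g \in addX a]
  | g in goal].

Definition pre_clauses : {set clause pvar} :=
  [set [set ((x.1.1, x.1.2), false)] :|:
       [set ((inord x.1.1.-1, a'), true)
       | a' in act_layer x.1.1.-1 & x.2 \in addX a']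
  | x : 'I_T.+1 * Act * F
  & [&& 1 < x.1.1, x.1.2 \in act_layer x.1.1 & x.2 \in preX x.1.2]].

Definition mutex_clauses : {set clause pvar} :=
  [set [set ((x.1.1, x.1.2), false); ((x.1.1, x.2), false)]
  | x : 'I_T.+1 * Act * Act
  & [&& 0 < x.1.1, x.1.2 \in act_layer x.1.1, x.2 \in act_layer x.1.1 &
        act_mutex x.1.1 x.1.2 x.2]].

Definition gp_cnf : {set clause pvar} :=
  goal_clauses :|: pre_clauses :|: mutex_clauses.
End Graphplan.

Section MAP.
Variable n : nat.

(* None = L^0 ; Some (inl k) = L_1^(k+1), k < 2n-3 ;
   Some (inr i) = L_(i+2)^1, i < n-1 *)
Definition node := option ('I_(2 * n - 3) + 'I_(n - 1)).

Definition edge (x y : node) : bool :=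
  match x, y with
  | None, Some (inl k) => val k == 0
  | None, Some (inr _) => true
  | Some (inl k), Some (inl k') => val k' == (val k).+1
  | _, _ => false
  end.
Definition adj (x y : node) : bool := edge x y || edge y x.

(* facts: (x, true) = at-x, (x, false) = visited-x *)
Definition fact := (node * bool)%type.
Definition at_ (x : node) : fact := (x, true).
Definition visited (x : node) : fact := (x, false).

Definition move := {xy : node * node | adj xy.1 xy.2}.
Definition move_pre (m : move) : {set fact} := [set at_ (val m).1].
Definition move_add (m : move) : {set fact} :=
  [set at_ (val m).2; visited (val m).2].
Definition move_del (m : move) : {set fact} := [set at_ (val m).1].

Definition map_init : {set fact} := [set at_ None].

Definition level1 (x : node) : bool :=
  match x with Some (inl k) => val k == 0 | Some (inr _) => true | None => false end.
Definition map1_goal : {set fact} := [set visited x | x in level1].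

Definition MAP1_cnf : {set clause (pvar fact move (2 * n - 2))} :=
  gp_cnf move_pre move_add move_del map_init map1_goal (2 * n - 2).
End MAP.

(* Main.v *)
Require Import Defs.
From mathcomp Require Import all_boot.
From mathcomp Require Import zify.
Set Implicit Arguments. Unset Strict Implicit. Unset Printing Implicit Defensive.

Lemma card_sum (T : finType) (A : {set T}) (Q : pred T) : #|[set y in A | Q y]| = \sum_(y in A) Q y.
Proof.
rewrite -sum1_card [LHS]big_mkcond [RHS]big_mkcond /=.
apply: eq_bigr => y _; rewrite !inE; by case: (y \in A); case: (Q y).
Qed.

Section Sat.
Variable V : finType.
Definition sat (al : V -> bool) (C : clause V) : bool := [exists l in C, al l.1 == l.2].

Lemma resolvent_sound al (C D E : clause V) :
  resolvent C D E -> ~~ sat al E -> ~~ sat al C || ~~ sat al D.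
Proof.
case/existsP=> v /and3P[vC vD /eqP->] nE.
case av: (al v).
- apply/orP; right; apply/negP=> /existsP[l /andP[lD /eqP al_l]].
  move/negP: nE; apply; apply/existsP; exists l; rewrite al_l eqxx andbT.
  rewrite in_setU; apply/orP; right; rewrite in_setD1 lD andbT.
  apply/negP=> /eqP lE; move: al_l; rewrite lE /= av //.
- apply/orP; left; apply/negP=> /existsP[l /andP[lC /eqP al_l]].
  move/negP: nE; apply; apply/existsP; exists l; rewrite al_l eqxx andbT.
  rewrite in_setU; apply/orP; left; rewrite in_setD1 lC andbT.
  apply/negP=> /eqP lE; move: al_l; rewrite lE /= av //.
Qed.

Lemma sat0 al : sat al set0 = false.
Proof. by apply/existsP=> [[l]]; rewrite inE. Qed.
End Sat.

Section Bottleneck.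
Variable V : finType.
Variable K : nat.
Local Notation P := 'I_K.+1.
Local Notation H := 'I_K.
Local Notation cfg := {ffun H -> P}.

Definition upd (g : cfg) (j : H) (p : P) : cfg := [ffun x => if x == j then p else g x].

Lemma missing_unique (g : cfg) p q : injective g -> p \notin codom g -> q != p -> q \in codom g.
Proof.
move=> ig pg qp; apply/negPn/negP=> qg.
have c1 : #|[set x | x \in codom g]| = K by rewrite cardsE card_codom // card_ord.
have := cardsC [set x | x \in codom g]; rewrite c1 card_ord => e.
have sub : [set p; q] \subset ~: [set x | x \in codom g].
  by apply/subsetP=> x; rewrite !inE => /orP[]/eqP->; rewrite ?pg ?qg.
have := subset_leq_card sub; rewrite cards2 eq_sym qp; lia.
Qed.

Lemma upd_inj (g : cfg) j p : injective g -> p \notin codom g -> injective (upd g j p).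
Proof.
move=> ig pg x y; rewrite !ffunE.
case: (x =P j) => [->|xj]; case: (y =P j) => [->|yj] //.
- by move=> e; move: pg; rewrite e codom_f.
- by move=> e; move: pg; rewrite -e codom_f.
- by move/ig.
Qed.

Variable A : cfg -> H -> V -> bool.
Variable Phi : {set clause V}.

Hypothesis H1 : forall C, C \in Phi -> exists O : {set P}, #|O| <= 2 /\
  forall (g : cfg) h p, injective g -> p \notin codom g -> ~~ sat (A g h) C -> p \in O.
Hypothesis H2 : forall (g : cfg) h (j : H) (p : P), injective g -> p \notin codom g ->
  forall v, A g h v != A (upd g j p) j v ->
  forall (g2 : cfg) h2, injective g2 -> g2 j = p -> A g2 h2 v = A (upd g j p) j v.

Definition ext (M : {set P * H}) (g : cfg) := [forall x in M, g x.2 == x.1].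
Definition matching (M : {set P * H}) :=
  [forall x in M, forall y in M, (x.1 == y.1) == (x.2 == y.2)].
Definition UP (M : {set P * H}) := ~: [set x.1 | x in M].
Definition UH (M : {set P * H}) := ~: [set x.2 | x in M].
Definition UU M := setX (UP M) (UH M).
Definition Sset M C := [set p : P | [exists g : cfg, exists h : H,
   [&& injectiveb g, ext M g, p \notin codom g & ~~ sat (A g h) C]]].
Definition Kset C := [set x : P * H | [forall g : cfg, forall h : H,
   (injectiveb g && (g x.2 == x.1)) ==> sat (A g h) C]].
Definition dead M C := [forall g : cfg, forall h : H,
   (injectiveb g && ext M g) ==> sat (A g h) C].

Lemma matchingP M : matching M ->
  forall x y, x \in M -> y \in M -> (x.1 == y.1) = (x.2 == y.2).
Proof. by move=> /forallP mM x y xM yM; move: (mM x); rewrite xM /= => /forallP/(_ y); rewrite yM /= => /eqP. Qed.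

Lemma card_M1 M : matching M -> #|[set x.1 | x in M]| = #|M|.
Proof.
move=> mM; apply: card_in_imset => x y xM yM /eqP e.
move: (e); rewrite (matchingP mM xM yM) => /eqP e2.
by case: x y e e2 {xM yM} => [a b] [c d] /= /eqP -> ->.
Qed.

Lemma card_M2 M : matching M -> #|[set x.2 | x in M]| = #|M|.
Proof.
move=> mM; apply: card_in_imset => x y xM yM /eqP e.
move: (e); rewrite -(matchingP mM xM yM) => /eqP e2.
by case: x y e e2 {xM yM} => [a b] [c d] /= /eqP -> ->.
Qed.

Lemma card_UP M : matching M -> #|UP M| = K.+1 - #|M|.
Proof. move=> mM; have := cardsC [set x.1 | x in M]; rewrite card_M1 // card_ord /UP; lia. Qed.
Lemma card_UH M : matching M -> #|UH M| = K - #|M|.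
Proof. move=> mM; have := cardsC [set x.2 | x in M]; rewrite card_M2 // card_ord /UH; lia. Qed.

Lemma matching_add M (x : P * H) : matching M -> x.1 \in UP M -> x.2 \in UH M ->
  matching (x |: M).
Proof.
move=> mM x1 x2; apply/forallP=> y; apply/implyP; rewrite in_setU1 => yM.
apply/forallP=> z; apply/implyP; rewrite in_setU1 => zM.
case/orP: yM => [/eqP->|yM]; case/orP: zM => [/eqP->|zM]; rewrite ?eqxx //.
- apply/eqP; move: x1 x2; rewrite !inE.
  case: (x.1 =P z.1) => [e|_]; first by rewrite e (imset_f _ zM).
  case: (x.2 =P z.2) => [e|_] //; by move=> _; rewrite e (imset_f _ zM).
- apply/eqP; move: x1 x2; rewrite !inE.
  case: (y.1 =P x.1) => [e|_]; first by rewrite -e (imset_f _ yM).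
  case: (y.2 =P x.2) => [e|_] //; by move=> _; rewrite -e (imset_f _ yM).
- by rewrite (matchingP mM yM zM).
Qed.

Lemma ext_exists (p : P) : forall n M, #|UH M| <= n -> matching M -> p \in UP M ->
  exists g : cfg, [/\ injective g, ext M g & p \notin codom g].
Proof.
elim=> [|n IH] M.
- rewrite leqn0 => /eqP/cards0_eq UH0 mM pUP.
  have hasq j : exists q, (q, j) \in M.
    have : j \notin UH M by rewrite UH0 inE.
    rewrite inE negbK => /imsetP[x xM ->]; exists x.1; by case: x xM.
  pose g : cfg := [ffun j => odflt p [pick q | (q, j) \in M]].
  have gP j : (g j, j) \in M.
    rewrite ffunE; case: pickP => [q //|/= none]; case: (hasq j) => q qM.
    by move: (none q); rewrite qM.
  exists g; split.
  + move=> j1 j2 e; have := matchingP mM (gP j1) (gP j2); rewrite /= e eqxx.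
    by move/esym/eqP.
  + apply/forallP=> x; apply/implyP=> xM; have := matchingP mM (gP x.2) xM.
    by rewrite /= eqxx => ->.
  + apply/negP=> /codomP[j e]; move: pUP; rewrite inE e.
    by rewrite (imset_f (fun x : P * H => x.1) (gP j)).
- move=> cUH mM pUP.
  case: (set_0Vmem (UH M)) => [UH0|[j jU]].
  + by apply: (IH M) => //; rewrite UH0 cards0.
  have : 0 < #|UP M :\ p|.
    have c1 := card_UP mM; have c2 := card_UH mM; have c3 := cardsD1 j (UH M).
    have c4 := cardsD1 p (UP M); rewrite jU in c3; rewrite pUP in c4; lia.
  case/card_gt0P=> q; rewrite in_setD1 => /andP[qp qU].
  have mM' : matching ((q, j) |: M) by apply: matching_add.
  have [||g [ig eg pg]] := IH ((q, j) |: M) _ mM'.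
  + rewrite card_UH // card_UH // cardsU1 in cUH *.
    have : (q, j) \notin M by apply/negP=> qM; move: qU; rewrite inE (imset_f (fun x : P * H => x.1) qM).
    move=> ->; lia.
  + rewrite inE; apply/negP=> /imsetP[x]; rewrite in_setU1 => /orP[/eqP->/= /eqP|xM e].
    * by rewrite eq_sym (negbTE qp).
    * by move: pUP; rewrite inE e (imset_f _ xM).
  + exists g; split=> //; apply/forallP=> x; apply/implyP=> xM.
    by move/forallP: eg => /(_ x); rewrite in_setU1 xM orbT.
Qed.


Lemma S_sub_UP M C : Sset M C \subset UP M.
Proof.
apply/subsetP=> p; rewrite inE => /existsP[g /existsP[h /and4P[_ eg pg _]]].
rewrite inE; apply/negP=> /imsetP[x xM e].
move/forallP: eg => /(_ x); rewrite xM /= => /eqP gx.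
by move: pg; rewrite e -gx codom_f.
Qed.

Lemma S_axiom M C : C \in Phi -> #|Sset M C| <= 2.
Proof.
case/H1=> O [cO HO]; apply: leq_trans cO; apply: subset_leq_card.
apply/subsetP=> p; rewrite inE => /existsP[g /existsP[h /and4P[/injectiveP ig _ pg ns]]].
exact: HO ns.
Qed.

Lemma S_res M C D E : resolvent C D E -> Sset M E \subset Sset M C :|: Sset M D.
Proof.
move=> rE; apply/subsetP=> p; rewrite inE => /existsP[g /existsP[h /and4P[ig eg pg ns]]].
case/orP: (resolvent_sound rE ns) => nC; rewrite in_setU !inE.
- by apply/orP; left; apply/existsP; exists g; apply/existsP; exists h; rewrite ig eg pg nC.
- by apply/orP; right; apply/existsP; exists g; apply/existsP; exists h; rewrite ig eg pg nC.
Qed.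

Lemma S_empty M : 0 < K -> matching M -> UP M \subset Sset M set0.
Proof.
move=> K0 mM; apply/subsetP=> p pU.
have [g [ig eg pg]] := ext_exists (leqnn _) mM pU.
rewrite inE; apply/existsP; exists g; apply/existsP; exists (Ordinal K0).
by rewrite eg pg sat0 andbT; apply/injectiveP.
Qed.

Lemma kill M C : 0 < K -> matching M ->
  #|Sset M C| * #|UP M :\: Sset M C| <= #|Kset C :&: UU M|.
Proof.
move=> K0 mM.
pose h0 : H := Ordinal K0.
pose wit (i : P) := [pick gh : cfg * H | [&& injectiveb gh.1, ext M gh.1, i \notin codom gh.1
                               & ~~ sat (A gh.1 gh.2) C]].
pose jfor (i q : P) : H := if wit i is Some gh then
   (if [pick j | gh.1 j == q] is Some j then j else h0) else h0.
pose F (iq : P * P) : P * H := (iq.1, jfor iq.1 iq.2).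
set S := Sset M C; set X := UP M :\: S.
have key : forall iq, iq \in setX S X ->
  [/\ F iq \in Kset C :&: UU M &
      exists gh : cfg * H, [/\ wit iq.1 = Some gh, injective gh.1 & gh.1 (F iq).2 = iq.2]].
  case=> i q; rewrite inE /= => /andP[iS qX].
  have : exists gh, wit i = Some gh.
    rewrite /wit; case: pickP => [gh _|none]; first by exists gh.
    exfalso; move: iS; rewrite inE => /existsP[g /existsP[h gh]].
    by move: (none (g, h)); rewrite /= gh.
  case=> [[g h] wE].
  have : [&& injectiveb g, ext M g, i \notin codom g & ~~ sat (A g h) C].
    by move: wE; rewrite /wit; case: pickP => [[g' h'] Pg [<- <-] //|_ //].
  case/and4P=> /injectiveP ig eg ig' ns.
  have qi : q != i by apply/negP=> /eqP e; move: qX; rewrite e inE iS.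
  have qg := missing_unique ig ig' qi.
  have [j jP] : exists j, [pick j | g j == q] = Some j.
    case: pickP => [j _|none]; first by exists j.
    by case/codomP: qg => j e; move: (none j); rewrite e eqxx.
  have gj : g j = q by move: jP; case: pickP => // j' /eqP e [<-].
  have Fe : F (i, q) = (i, j) by rewrite /F /jfor /= wE jP.
  have Fe' : jfor i q = j by rewrite /jfor wE jP.
  split; last by exists (g, h); split=> //; rewrite /= Fe'.
  rewrite Fe; move: qX; rewrite inE => /andP[qS qU].
  have jU : j \in UH M.
    rewrite inE; apply/negP=> /imsetP[x xM e].
    move/forallP: eg => /(_ x); rewrite xM /= -e gj => /eqP qx.
    by move: qU; rewrite inE qx (imset_f _ xM).
  have iU : i \in UP M by apply: (subsetP (S_sub_UP M C)).
  rewrite in_setI /UU in_setX iU jU andbT andbT.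
  have ig2 := upd_inj (j:=j) ig ig'.
  have eg2 : ext M (upd g j i).
    apply/forallP=> x; apply/implyP=> xM; rewrite ffunE.
    case: (x.2 =P j) => [e|_]; last by move/forallP: eg => /(_ x); rewrite xM.
    by move: jU; rewrite inE -e (imset_f _ xM).
  have qg2 : q \notin codom (upd g j i).
    apply/negP=> /codomP[x]; rewrite ffunE; case: (x =P j) => [_ e|xj e].
    - by move: qi; rewrite e eqxx.
    - by apply: xj; apply: ig; rewrite -e gj.
  have sat2 : sat (A (upd g j i) j) C.
    apply: contraT => ns2; case/negP: qS; rewrite /S inE.
    apply/existsP; exists (upd g j i); apply/existsP; exists j.
    by rewrite eg2 qg2 ns2 /= andbT; apply/injectiveP.
  rewrite inE; apply/forallP=> g2; apply/forallP=> h2; apply/implyP=> /andP[/injectiveP ig2' /eqP g2j].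
  case/existsP: sat2 => l /andP[lC /eqP Al].
  apply/existsP; exists l; rewrite lC /=.
  have dif : A g h l.1 != A (upd g j i) j l.1.
    apply/negP=> /eqP e; move/negP: ns; apply; apply/existsP; exists l.
    by rewrite lC e Al eqxx.
  by rewrite (@H2 g h j i ig ig' l.1 dif g2 h2 ig2' g2j) Al.
have Finj : {in setX S X &, injective F}.
  move=> [i q] [i' q'] /key [_ [gh [w1 _ e1]]] /key [_ [gh' [w2 _ e2]]] e.
  have ii : i = i' by case: e.
  subst i'; rewrite w1 in w2; case: w2 => ?; subst gh'.
  by have := e1; rewrite e e2 /= => ->.
rewrite -cardsX -(card_in_imset Finj); apply: subset_leq_card.
by apply/subsetP=> y /imsetP[iq /key [] ? _ ->].
Qed.

Lemma bottleneck M (pi : seq (clause V)) : matching M -> 7 <= #|UP M| -> refutation Phi pi ->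
  exists2 C, C \in pi & (~~ dead M C) && (#|UP M| ^ 2 <= 9 * #|Kset C :&: UU M|).
Proof.
move=> mM m7 /and3P[nz /eqP lastE /forallP allC].
have K0 : 0 < K by move: m7; rewrite card_UP //; lia.
set m := #|UP M| in m7 *.
pose Pr i := (i < size pi) && (m <= 3 * #|Sset M (nth set0 pi i)|).
have exPr : exists i, Pr i.
  exists (size pi).-1; rewrite /Pr nth_last lastE.
  have := subset_leq_card (S_empty (M:=M) K0 mM).
  by case: pi nz {allC lastE Pr} => //= c s _; rewrite leqnn /= -/m; lia.
case: (ex_minnP exPr) => i0 /andP[i0s Pi0] i0min.
pose C := nth set0 pi i0.
have Cpi : C \in pi by apply: mem_nth.
have [S3 S2] : m <= 3 * #|Sset M C| /\ 3 * #|Sset M C| <= 2 * m - 2.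
  split=> //.
  have := allC (Ordinal i0s); rewrite /= -/C => /orP[CPhi|].
    by have := S_axiom M CPhi; move: Pi0; rewrite -/C; lia.
  case/existsP=> j /existsP[k rjk].
  have nPj : forall x : 'I_i0, 3 * #|Sset M (nth set0 pi x)| < m.
    move=> x; have := i0min x; rewrite /Pr (ltn_trans (ltn_ord x) i0s) /=.
    case: leqP => // _ /(_ isT); have := ltn_ord x; lia.
  have := subset_leq_card (S_res M rjk); have := (leq_card_setU (Sset M (nth set0 pi j)) (Sset M (nth set0 pi k))).1.
  have := nPj j; have := nPj k. move: (#|Sset M C|) (#|Sset M (nth set0 pi j)|) (#|Sset M (nth set0 pi k)|) (#|Sset M (nth set0 pi j) :|: Sset M (nth set0 pi k)|) => a b c d. lia.
have Ssub := S_sub_UP M C.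
have cX : #|UP M :\: Sset M C| = m - #|Sset M C|.
  by rewrite cardsD (setIidPr Ssub).
have hk := kill C K0 mM; rewrite cX in hk.
exists C => //; apply/andP; split.
- have : 0 < #|Sset M C| by lia.
  case/card_gt0P=> p; rewrite inE => /existsP[g /existsP[h /and4P[ig eg _ ns]]].
  apply/negP=> /forallP/(_ g)/forallP/(_ h); rewrite ig eg /= => sC.
  by rewrite sC in ns.
- have hs : #|Sset M C| <= m by rewrite -/m; apply: subset_leq_card.
  set s := #|Sset M C| in S3 S2 hk hs *.
  move: hk; move: (#|Kset C :&: UU M|) => kk hk.
  have t3 : m <= 3 * (m - s) by lia.
  have := leq_mul S3 t3; move: (m - s) hk => t hk; rewrite -mulnn; nia.
Qed.

Lemma dead_mono (M M' : {set P * H}) (C : clause V) : M \subset M' -> dead M C -> dead M' C.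
Proof.
move=> sM /forallP dM; apply/forallP=> g; apply/forallP=> h; apply/implyP=> /andP[ig eg].
move: (dM g) => /forallP/(_ h)/implyP; apply; rewrite ig /=; apply/forallP=> x; apply/implyP=> xM.
by move/forallP: eg => /(_ x); rewrite (subsetP sM _ xM).
Qed.

Lemma UU_mono (M M' : {set P * H}) : M \subset M' -> UU M' \subset UU M.
Proof.
move=> sM; apply: setXS; rewrite /UP /UH setCS; exact: imsetS.
Qed.

Definition W (pi : seq (clause V)) mr (M : {set P * H}) :=
  [set C | (C \in pi) && ~~ dead M C && (mr ^ 2 <= 9 * #|Kset C :&: UU M|)].

Lemma greedy_step (pi : seq (clause V)) mr (M : {set P * H}) : matching M -> #|M| < K -> (K.+1) ^ 2 <= 4 * mr ^ 2 ->
  exists M', [/\ matching M', #|M'| = #|M|.+1 & 36 * #|W pi mr M'| <= 35 * #|W pi mr M|].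
Proof.
move=> mM MK Kmr.
set WM := W pi mr M.
have cUU : #|UU M| = (K.+1 - #|M|) * (K - #|M|) by rewrite /UU cardsX card_UP // card_UH.
have UUne : 0 < #|UU M| by rewrite cUU muln_gt0; apply/andP; split; lia.
have UUle : #|UU M| <= (K.+1) ^ 2.
  by rewrite cUU -mulnn; apply: leq_mul; lia.
pose hit x := #|[set C in WM | x \in Kset C]|.
have dc : \sum_(x in UU M) hit x = \sum_(C in WM) #|Kset C :&: UU M|.
  rewrite /hit; under eq_bigr do rewrite card_sum.
  rewrite exchange_big /=; apply: eq_bigr => C _.
  rewrite -card_sum; apply: eq_card => x; rewrite !inE andbC //.
have lb : #|WM| * mr ^ 2 <= 9 * \sum_(C in WM) #|Kset C :&: UU M|.
  rewrite -sum_nat_const big_distrr /=; apply: leq_sum => C.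
  by rewrite inE => /andP[_].
case: (pickP [pred x | (x \in UU M) && (#|WM| <= 36 * hit x)]) => [x /andP[xU hx]|none]; last first.
  exfalso.
  have allx : forall x, x \in UU M -> (36 * hit x).+1 <= #|WM|.
    by move=> x xU; move: (none x); rewrite /= xU /=; case: leqP.
  have : \sum_(x in UU M) (36 * hit x).+1 <= \sum_(x in UU M) #|WM| by apply: leq_sum.
  rewrite sum_nat_const.
  have -> : \sum_(i in UU M) (36 * hit i).+1 = 36 * (\sum_(i in UU M) hit i) + #|UU M|.
    by rewrite -sum1_card big_distrr -big_split /=; apply: eq_bigr => i _; rewrite addn1.
  rewrite dc.
  have a1 : #|WM| * (K.+1) ^ 2 <= #|WM| * (4 * mr ^ 2) by rewrite leq_mul2l Kmr orbT.
  have a2 : #|UU M| * #|WM| <= (K.+1) ^ 2 * #|WM| by rewrite leq_mul2r UUle orbT.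
  move: lb a1 a2 UUne; move: (\sum_(C in WM) #|Kset C :&: UU M|) (#|UU M|) (#|WM|) (mr ^ 2) ((K.+1) ^ 2).
  move=> S u w m2 k2; nia.
have [xUP xUH] : x.1 \in UP M /\ x.2 \in UH M by case: x xU {hx} => p j; rewrite /UU in_setX => /andP.
have xM : x \notin M by apply/negP=> xM; move: xUP; rewrite inE (imset_f _ xM).
exists (x |: M); split.
- exact: matching_add.
- by rewrite cardsU1 xM.
have sM : M \subset x |: M by apply/subsetP=> y yM; rewrite in_setU1 yM orbT.
have sub : W pi mr (x |: M) \subset WM :\: [set C in WM | x \in Kset C].
  apply/subsetP=> C; rewrite !inE => /andP[/andP[Cpi nd] wC].
  have nd' : ~~ dead M C by apply: contra nd; apply: dead_mono.
  have wM : mr ^ 2 <= 9 * #|Kset C :&: UU M|.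
    apply: leq_trans wC _; rewrite leq_mul2l /=; apply: subset_leq_card.
    by apply: setIS; apply: UU_mono.
  have nK : ~~ [forall g : cfg, forall h : H, (injectiveb g && (g x.2 == x.1)) ==> sat (A g h) C].
    apply: contra nd => xK; apply/forallP=> g; apply/forallP=> h.
    apply/implyP=> /andP[ig /forallP eg]; move: (eg x); rewrite setU11 /= => gx.
    by move: xK => /forallP/(_ g)/forallP/(_ h); rewrite ig gx.
  by rewrite Cpi nd' wM nK.
have := subset_leq_card sub; rewrite cardsD.
have -> : WM :&: [set C in WM | x \in Kset C] = [set C in WM | x \in Kset C].
  by apply/setIidPr/subsetP=> C; rewrite inE => /andP[].
have : hit x <= #|WM| by apply: subset_leq_card; apply/subsetP=> C; rewrite inE => /andP[].
rewrite /hit in hx *; lia.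
Qed.

Lemma greedy (pi : seq (clause V)) mr : (K.+1) ^ 2 <= 4 * mr ^ 2 -> forall s, s <= K ->
  exists M, [/\ matching M, #|M| = s & 36 ^ s * #|W pi mr M| <= 35 ^ s * size pi].
Proof.
move=> Kmr; elim=> [|s IH] sK.
- exists set0; split.
  + by apply/forallP=> x; rewrite inE.
  + by rewrite cards0.
  rewrite !expn0 !mul1n; apply: leq_trans (card_size pi).
  rewrite -cardsE; apply: subset_leq_card; apply/subsetP=> C; rewrite !inE.
  by case/andP=> /andP[].
- have [M [mM cM hM]] := IH (ltnW sK).
  have [|M' [mM' cM' hM']] := greedy_step pi mM (_ : #|M| < K) Kmr; first by rewrite cM.
  exists M'; split=> //; first by rewrite cM' cM.
  rewrite !expnS; move: hM hM'; move: (36 ^ s) (35 ^ s) (#|W pi mr M|) (#|W pi mr M'|) (size pi).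
  move=> a b w w' z h1 h2; nia.
Qed.

Theorem abstract_lb (pi : seq (clause V)) : 13 <= K.+1 -> refutation Phi pi ->
  36 ^ (K.+1)./2 <= 35 ^ (K.+1)./2 * size pi.
Proof.
move=> K13 ref.
set r := (K.+1)./2; set mr := K.+1 - r.
have Kmr : (K.+1) ^ 2 <= 4 * mr ^ 2.
  have : K.+1 <= 2 * mr by rewrite /mr /r; lia.
  move=> h; rewrite -!mulnn; have := leq_mul h h; lia.
have [|M [mM cM hM]] := greedy pi Kmr (_ : r <= K); first by rewrite /r; lia.
have cU : #|UP M| = mr by rewrite card_UP // cM.
have [|C Cpi /andP[nd wide]] := bottleneck mM (_ : 7 <= #|UP M|) ref; first by rewrite cU /mr /r; lia.
have : 0 < #|W pi mr M|.
  by apply/card_gt0P; exists C; rewrite inE Cpi nd -cU wide.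
move: hM; move: (36 ^ r) (35 ^ r) (#|W pi mr M|) => a b w; nia.
Qed.

End Bottleneck.


Section GPSound.
Variables (F B : finType) (pre add del : B -> {set F}).
Implicit Types (s : {set F}) (b : B) (a : (B + F)%type) (L : layerT F) (p q : F).

Definition good (L : layerT F) (s : {set F}) :=
  (s \subset L.1) && [forall p in s, forall q in s, (p, q) \notin L.2].
Definition Aset (s : {set F}) (b : B) : {set (B + F)%type} :=
  (inl b : (B + F)%type) |: [set (inr p : (B + F)%type) | p in s :\: del b].


Lemma Aset_pre s b a : pre b \subset s -> a \in Aset s b -> preX pre a \subset s.
Proof.
move=> pb; rewrite in_setU1 => /orP[/eqP-> //|/imsetP[p]].
by rewrite in_setD => /andP[_ ps] ->; rewrite sub1set.
Qed.

Lemma Aset_act L s b a : good L s -> pre b \subset s -> a \in Aset s b ->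
  a \in actions_at pre L.
Proof.
move=> /andP[sL /forallP gs] pb aA; have pa := Aset_pre pb aA.
rewrite inE (subset_trans pa sL) /=; apply/forallP=> p; apply/implyP=> pP.
apply/forallP=> q; apply/implyP=> qP.
move: (gs p); rewrite (subsetP pa _ pP) /= => /forallP/(_ q); by rewrite (subsetP pa _ qP).
Qed.

Lemma Aset_nomutex L s b a a' : good L s -> pre b \subset s -> a \in Aset s b -> a' \in Aset s b ->
  ~~ amutex pre add del L a a'.
Proof.
move=> gd pb aA aA'; have pa := Aset_pre pb aA; have pa' := Aset_pre pb aA'.
case/andP: gd => _ /forallP gs.
have noint : forall x y, x \in Aset s b -> y \in Aset s b -> x != y -> ~~ interferes pre add del x y.
  move=> x y; rewrite !in_setU1 => /orP[/eqP->|/imsetP[p pS ->]] /orP[/eqP->|/imsetP[q qS ->]].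
  - by rewrite eqxx.
  - move=> _; apply/negP; case/existsP=> z /andP[zd]; rewrite /= !inE => /orP[]/eqP zq.
    + by move: qS; rewrite in_setD -zq zd.
    + by move: qS; rewrite in_setD -zq zd.
  - by move=> _; apply/negP; case/existsP=> z; rewrite inE.
  - by move=> _; apply/negP; case/existsP=> z; rewrite inE.
rewrite /amutex; case: (a =P a') => [->|/eqP ne]; first by [].
rewrite /= !negb_or; apply/and3P; split.
- exact: noint.
- by apply: noint; rewrite // eq_sym.
- apply/negP; case/existsP=> p /andP[pP /existsP[q /andP[qP pq]]].
  move: (gs p); rewrite (subsetP pa _ pP) /= => /forallP/(_ q).
  by rewrite (subsetP pa' _ qP) pq.
Qed.

Lemma Aset_sup s b p : p \in (s :\: del b) :|: add b -> exists2 a, a \in Aset s b & p \in addX add a.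
Proof.
rewrite in_setU => /orP[pS|pa].
- exists (inr p); last by rewrite /= inE.
  by rewrite in_setU1; apply/orP; right; apply: imset_f.
- by exists (inl b); rewrite ?setU11.
Qed.

Lemma good_next L s b : good L s -> pre b \subset s ->
  good (next_layer pre add del L) ((s :\: del b) :|: add b).
Proof.
move=> gd pb; apply/andP; split.
- apply/subsetP=> p /Aset_sup [a aA pa]; rewrite /=.
  by apply/bigcupP; exists a => //; apply: Aset_act aA.
- apply/forallP=> p; apply/implyP=> /Aset_sup [a aA pa].
  apply/forallP=> q; apply/implyP=> /Aset_sup [a' aA' qa'].
  rewrite /= inE; apply/negP=> /and4P[_ _ _ /forallP/(_ a)].
  rewrite (Aset_act gd pb aA) /= => /forallP/(_ a'); rewrite (Aset_act gd pb aA') pa qa' /=.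
  by apply/negP; apply: (Aset_nomutex gd pb aA aA').
Qed.

Lemma good_init (init : {set F}) : good (init, set0) init.
Proof. by apply/andP; split=> //=; apply/forallP=> p; apply/implyP=> _; apply/forallP=> q; rewrite inE implybT. Qed.

End GPSound.


Section MAPinst.
Variable k : nat.
Local Notation n := k.+2.
Local Notation T := (2 * k.+2 - 2).
Local Notation nd := (node k.+2).
Local Notation fct := (fact k.+2).
Local Notation mv := (move k.+2).
Local Notation V := (pvar fct mv T).
Local Notation cfg := {ffun 'I_k.+1 -> 'I_k.+2}.

Lemma L11_lt : 0 < 2 * k.+2 - 3. Proof. lia. Qed.
Definition L11 : 'I_(2 * k.+2 - 3) := Ordinal L11_lt.
Lemma pig_lt (p : 'I_k.+2) : p.-1 < k.+2 - 1. Proof. have := ltn_ord p; lia. Qed.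
Definition pig (p : 'I_k.+2) : nd :=
  if (p : nat) == 0 then Some (inl L11) else Some (inr (Ordinal (pig_lt p))).

Lemma pig_inj : injective pig.
Proof.
move=> p q; rewrite /pig; case: ((p : nat) =P 0) => p0; case: ((q : nat) =P 0) => q0 //.
- by move=> _; apply: ord_inj; rewrite /= p0 q0.
- move=> [] e; apply: ord_inj; lia.
Qed.

Lemma level1_pig x : level1 x -> exists p, x = pig p.
Proof.
case: x => [[y|y]|] //= h.
- have lt : 0 < k.+2 by [].
  exists (Ordinal lt); rewrite /pig /=; congr (Some (inl _)); apply: val_inj; by move/eqP: h.
- have lt : y.+1 < k.+2 by have := ltn_ord y; lia.
  exists (Ordinal lt); rewrite /pig /=; congr (Some (inr _)); exact: val_inj.
Qed.

Lemma adj_pig p : adj None (pig p) && adj (pig p) None.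
Proof. by rewrite /adj /pig; case: ((p : nat) == 0). Qed.

Definition mvp (q : 'I_k.+2) (t : nat) : nd * nd :=
  if odd t then (None, pig q) else (pig q, None).
Definition hole (t : nat) : 'I_k.+1 := inord (t.-1)./2.
Definition mvpair (g : cfg) (t : nat) := mvp (g (hole t)) t.
Definition mvtrue (g : cfg) (t : nat) (xy : nd * nd) :=
  [&& 0 < t, t <= T & xy == mvpair g t].

Lemma adj_mvp q t : adj (mvp q t).1 (mvp q t).2.
Proof. rewrite /mvp; case: (odd t) => /=; by case/andP: (adj_pig q). Qed.

Definition mv0 : mv := exist _ (mvp ord0 1) (adj_mvp ord0 1).
Definition bm (g : cfg) (t : nat) : mv := insubd mv0 (mvpair g t).
Lemma bmE g t : val (bm g t) = mvpair g t.
Proof. by rewrite /bm insubdK //; apply: adj_mvp. Qed.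

Definition visB (g : cfg) (x : nd) (t : nat) :=
  [exists j : 'I_k.+1, (x == pig (g j)) && (2 * j + 2 <= t)].
Definition vis (g : cfg) (h : 'I_k.+1) (x : nd) (t : nat) :=
  visB g x t || [exists p, [&& p \notin codom g, x == pig p & 2 * h + 2 <= t]].

Definition betaA (g : cfg) (t : nat) (a : Act fct mv) : bool :=
  match a with
  | inl m => mvtrue g t (val m)
  | inr (x, b) => ~~ b && visB g x t
  end.
Definition alphaA (g : cfg) (h : 'I_k.+1) (t : nat) (a : Act fct mv) : bool :=
  match a with
  | inl m => mvtrue g t (val m)
  | inr (x, b) => ~~ b && vis g h x t
  end.
Definition beta (g : cfg) (v : V) : bool := betaA g v.1 v.2.
Definition alpha (g : cfg) (h : 'I_k.+1) (v : V) : bool := alphaA g h v.1 v.2.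

Fixpoint st (g : cfg) (t : nat) : {set fct} :=
  if t is t'.+1 then (st g t' :\: move_del (bm g t)) :|: move_add (bm g t)
  else map_init k.+2.

Definition pos (g : cfg) (t : nat) : nd := if t == 0 then None else (mvpair g t).2.

Lemma half_even t : ~~ odd t -> (t.+1)./2 = t./2.
Proof. move=> ot; have := odd_double_half t; rewrite (negbTE ot) /= => e; lia. Qed.

Lemma mvpair1 g t : (mvpair g t.+1).1 = pos g t.
Proof.
rewrite /pos /mvpair /mvp; case: t => [|t] //=.
case/boolP: (odd t) => ot; rewrite /= ?ot //=.
by rewrite /hole; congr (pig (g (inord _))); exact: half_even.
Qed.

Local Notation FL := (fact_layer (@move_pre k.+2) (@move_add k.+2) (@move_del k.+2) (map_init k.+2)).
Local Notation AL := (act_layer (@move_pre k.+2) (@move_add k.+2) (@move_del k.+2) (map_init k.+2)).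

Lemma st_at (g : cfg) t : at_ (pos g t) \in st g t.
Proof.
case: t => [|t]; first by rewrite /= /map_init inE.
by rewrite /= in_setU /move_add bmE !inE eqxx orbT.
Qed.

Lemma pre_bm (g : cfg) t : 0 < t -> move_pre (bm g t) \subset st g t.-1.
Proof.
case: t => // t _; rewrite /move_pre bmE mvpair1 sub1set; exact: st_at.
Qed.

Lemma st_good (g : cfg) t : good (FL t) (st g t).
Proof.
elim: t => [|t IH]; first exact: good_init.
exact: (good_next (@move_add k.+2) (@move_del k.+2) IH (pre_bm g (ltn0Sn t))).
Qed.

Lemma hole_odd (j : 'I_k.+1) : hole (2 * j + 1) = j.
Proof.
apply: ord_inj; rewrite /hole inordK; have := ltn_ord j; first by lia.
by rewrite addn1 /= mul2n half_double.
Qed.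

Lemma st_vis (g : cfg) (j : 'I_k.+1) t : 2 * j + 1 <= t -> visited (pig (g j)) \in st g t.
Proof.
elim: t => [|t IH]; first by lia.
rewrite leq_eqVlt => /orP[/eqP e|lt].
- rewrite /= in_setU /move_add bmE /mvpair -e hole_odd /mvp.
  have -> : odd (2 * j + 1) by rewrite oddD oddM.
  by rewrite /= !inE eqxx !orbT.
- rewrite /= in_setU in_setD (IH lt) /move_del !inE /at_ /visited /=.
  by rewrite !xpair_eqE /= !andbF.
Qed.

Lemma betaA_t0 (g : cfg) t a : betaA g t a -> 0 < t.
Proof.
case: a => [m|[x b]] /=; first by case/and3P.
by case: b => //= /existsP[j /andP[_ jt]]; lia.
Qed.

Lemma betaA_Aset (g : cfg) t a : betaA g t a -> a \in Aset (@move_del k.+2) (st g t.-1) (bm g t).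
Proof.
case: a => [m|[x b]] /=.
- case/and3P=> t0 tT /eqP e; rewrite in_setU1; apply/orP; left; apply/eqP.
  by congr inl; apply: val_inj; rewrite /= bmE e.
- case: b => //= /existsP[j /andP[/eqP -> jt]].
  rewrite in_setU1; apply/orP; right; apply/imsetP; exists (visited (pig (g j))) => //.
  rewrite in_setD st_vis; last by lia.
  by rewrite /move_del !inE /visited /at_ xpair_eqE andbF.
Qed.

Lemma betaA_layer (g : cfg) t a : betaA g t a -> a \in AL t.
Proof.
move=> ba; have t0 := betaA_t0 ba.
exact: (Aset_act (st_good g t.-1) (pre_bm g t0) (betaA_Aset ba)).
Qed.

Lemma betaA_nomutex (g : cfg) t a b : betaA g t a -> betaA g t b ->
  ~~ amutex (@move_pre k.+2) (@move_add k.+2) (@move_del k.+2) (FL t.-1) a b.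
Proof.
move=> ba bb; have t0 := betaA_t0 ba.
exact: (Aset_nomutex (@move_add k.+2) (st_good g t.-1) (pre_bm g t0) (betaA_Aset ba) (betaA_Aset bb)).
Qed.

Lemma beta_support (g : cfg) t a pf : 1 < t -> t <= T -> betaA g t a ->
  pf \in preX (@move_pre k.+2) a -> exists2 a', betaA g t.-1 a' & pf \in addX (@move_add k.+2) a'.
Proof.
move=> t1 tT; case: a => [m|[x b]] /=.
- case/and3P=> _ _ /eqP e; rewrite /move_pre => /set1P ->.
  have -> : (val m).1 = (mvpair g t).1 by rewrite -e.
  exists (inl (bm g t.-1)); rewrite /= ?bmE.
  + by rewrite /mvtrue eqxx andbT; apply/andP; split; lia.
  + case: t t1 {tT e} => [|t] // _; rewrite mvpair1 /move_add bmE /pos.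
    case: t => [|t] //=; by rewrite !inE eqxx.
- case: b => //= /existsP[j /andP[/eqP xe jt]]; rewrite inE => /eqP ->.
  case: (ltngtP (2 * j + 2) t) => [lt|gt|eq]; [|lia|].
  + by exists (inr (x, false)); rewrite /= ?inE //; apply/existsP; exists j; rewrite xe eqxx /=; lia.
  + exists (inl (bm g t.-1)); rewrite /= ?bmE.
    * by rewrite /mvtrue eqxx andbT; apply/andP; split; lia.
    * have -> : t.-1 = 2 * j + 1 by lia.
      rewrite /move_add bmE /mvpair hole_odd /mvp.
      have -> : odd (2 * j + 1) by rewrite oddD oddM.
      by rewrite xe /= !inE eqxx orbT.
Qed.

Lemma T_pos : 0 < T. Proof. lia. Qed.

Lemma beta_clauses (g : cfg) (p : 'I_k.+2) C : injective g -> p \notin codom g ->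
  C \in MAP1_cnf k.+2 -> ~~ sat (beta g) C ->
  ((ord_max, inr (visited (pig p))), true) \in C.
Proof.
move=> ig pg; rewrite /MAP1_cnf /gp_cnf !in_setU => /orP[/orP[Cg|Cp]|Cm] ns.
- case/imsetP: Cg => gf; rewrite /map1_goal => /imsetP[x xl ->] Ce; subst C.
  have [q ?] := level1_pig xl; subst x.
  case: (q =P p) => [->|/eqP qp].
  + apply: imset_f; rewrite inE; apply/andP; split; last by rewrite /= set11.
    apply: (@betaA_layer (upd g ord0 p)); rewrite /= /visB.
    apply/existsP; exists ord0; rewrite /upd ffunE eqxx eqxx /=; lia.
  + have := missing_unique ig pg qp => /codomP[j qe]; subst q.
    exfalso; move/negP: ns; apply; apply/existsP.
    have ba : betaA g T (inr (visited (pig (g j)))).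
      rewrite /= /visB; apply/existsP; exists j; rewrite eqxx /=; have := ltn_ord j; lia.
    exists ((ord_max, inr (visited (pig (g j)))), true); apply/andP; split; last by apply/eqP; exact: ba.
    apply: imset_f; rewrite inE; apply/andP; split; [exact: betaA_layer ba | by rewrite /= set11].
- exfalso; move/negP: ns; apply.
  case/imsetP: Cp => [[[t a] pf]] /=; rewrite inE => /and3P[t1 aL pfP] ->.
  case ba: (betaA g t a).
  + have tT : t <= T by have := ltn_ord t.
    have [a' ba' pfa'] := beta_support t1 tT ba pfP.
    apply/existsP; exists ((inord t.-1, a'), true); rewrite /= /beta /= inordK; last by lia.
    rewrite ba' andbT in_setU; apply/orP; right; apply: imset_f.
    by rewrite inE pfa' andbT; exact: betaA_layer ba'.
  + apply/existsP; exists ((t, a), false); rewrite /beta /= ba eqxx andbT.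
    by rewrite in_setU inE eqxx.
- exfalso; move/negP: ns; apply.
  case/imsetP: Cm => [[[t a] b]] /=; rewrite inE => /and4P[t0 aL bL mab] ->.
  case ba: (betaA g t a); last first.
    by apply/existsP; exists ((t, a), false); apply/andP; split; [rewrite !inE eqxx | apply/eqP; rewrite /beta /= ba].
  case bb: (betaA g t b); last first.
    by apply/existsP; exists ((t, b), false); apply/andP; split; [rewrite !inE eqxx orbT | apply/eqP; rewrite /beta /= bb].
  by move: (betaA_nomutex ba bb); rewrite /act_mutex in mab; rewrite mab.
Qed.

Definition fpos (g : cfg) (h : 'I_k.+1) (q : 'I_k.+2) : nat :=
  if [pick j | g j == q] is Some j then val j else val h.

Lemma fpos_g (g : cfg) h j : injective g -> fpos g h (g j) = j.
Proof.
move=> ig; rewrite /fpos; case: pickP => [j' /eqP /ig -> //|none].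
by move: (none j); rewrite eqxx.
Qed.

Lemma fpos_miss (g : cfg) h q : q \notin codom g -> fpos g h q = h.
Proof.
move=> qg; rewrite /fpos; case: pickP => [j' /eqP e|//].
by move: qg; rewrite -e codom_f.
Qed.

Lemma vis_pig (g : cfg) h q t : injective g -> vis g h (pig q) t = (2 * fpos g h q + 2 <= t).
Proof.
move=> ig; rewrite /vis /visB.
case: (boolP (q \in codom g)) => [/codomP[j ->]|qg].
- rewrite fpos_g //; apply/idP/idP.
  + case/orP=> [/existsP[j' /andP[/eqP /pig_inj /ig -> //]]|/existsP[p' /and3P[pg /eqP /pig_inj e _]]].
    by move: pg; rewrite -e codom_f.
  + by move=> jt; apply/orP; left; apply/existsP; exists j; rewrite eqxx.
- rewrite fpos_miss //; apply/idP/idP.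
  + case/orP=> [/existsP[j' /andP[/eqP /pig_inj e _]]|/existsP[p' /and3P[_ _ //]]].
    by move: qg; rewrite e codom_f.
  + by move=> ht; apply/orP; right; apply/existsP; exists q; rewrite qg eqxx.
Qed.

Lemma vis_nopig (g : cfg) h x t : (forall q, x != pig q) -> vis g h x t = false.
Proof.
move=> nx; rewrite /vis /visB; apply/negbTE; rewrite negb_or; apply/andP; split.
- by apply/negP=> /existsP[j /andP[/eqP e _]]; move: (nx (g j)); rewrite e eqxx.
- by apply/negP=> /existsP[q /and3P[_ /eqP e _]]; move: (nx q); rewrite e eqxx.
Qed.

Lemma visB_le (g : cfg) h x t : visB g x t -> vis g h x t.
Proof. by rewrite /vis => ->. Qed.

Lemma upd_miss (g : cfg) j p : injective g -> p \notin codom g -> g j \notin codom (upd g j p).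
Proof.
move=> ig pg; apply/negP=> /codomP[x]; rewrite ffunE; case: (x =P j) => [_ e|xj e].
- by move: pg; rewrite -e codom_f.
- by apply: xj; apply: ig.
Qed.

Lemma upd_j (g : cfg) j p : upd g j p j = p.
Proof. by rewrite /upd ffunE eqxx. Qed.

Lemma upd_o (g : cfg) j p j0 : j0 != j -> upd g j p j0 = g j0.
Proof. by move=> ne; rewrite /upd ffunE (negbTE ne). Qed.

Lemma alpha_H2 (g : cfg) h (j : 'I_k.+1) (p : 'I_k.+2) : injective g -> p \notin codom g ->
  forall v, alpha g h v != alpha (upd g j p) j v ->
  forall (g2 : cfg) h2, injective g2 -> g2 j = p -> alpha g2 h2 v = alpha (upd g j p) j v.
Proof.
move=> ig pg [t a] dif g2 h2 ig2 g2j; move: dif; rewrite /alpha /=.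
have ig' := upd_inj (j:=j) ig pg.
case: a => [m|[x b]] /=.
- rewrite /mvtrue /mvpair; case: (hole t =P j) => [->|hj].
  + by rewrite g2j /upd ffunE eqxx.
  + by rewrite /upd ffunE; move/eqP: hj => /negbTE ->; rewrite eqxx.
- case: b => //=.
  case: (pickP (fun q => x == pig q)) => [q /eqP ->|nx]; last first.
    by rewrite !vis_nopig // => q; rewrite nx.
  rewrite !vis_pig //.
  case: (q =P p) => [->|/eqP qp].
  + have e1 : fpos g2 h2 p = j by rewrite -{1}g2j fpos_g.
    have e2 : fpos (upd g j p) j p = j by have := fpos_g j j ig'; rewrite upd_j.
    by rewrite e1 e2.
  + have := missing_unique ig pg qp => /codomP[j0 ->].
    case: (j0 =P j) => [->|/eqP j0j].
    * have e1 : fpos g h (g j) = j by rewrite fpos_g.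
      have e2 : fpos (upd g j p) j (g j) = j by rewrite fpos_miss //; apply: upd_miss.
      by rewrite e1 e2 eqxx.
    * have e1 : fpos g h (g j0) = j0 by rewrite fpos_g.
      have e2 : fpos (upd g j p) j (g j0) = j0 by have := fpos_g j j0 ig'; rewrite upd_o.
      by rewrite e1 e2 eqxx.
Qed.

Lemma neg_lits C : C \in MAP1_cnf k.+2 -> #|[set l in C | ~~ l.2]| <= 2.
Proof.
rewrite /MAP1_cnf /gp_cnf !in_setU => /orP[/orP[Cg|Cp]|Cm].
- case/imsetP: Cg => gf _ ->.
  apply: leq_trans (_ : #|(set0 : {set lit V})| <= 2); last by rewrite cards0.
  by apply: subset_leq_card; apply/subsetP=> l; rewrite !inE => /andP[/imsetP[a _ ->]].
- case/imsetP: Cp => x _ ->.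
  apply: leq_trans (_ : #|[set ((x.1.1, x.1.2), false)]| <= 2); last by rewrite cards1.
  by apply: subset_leq_card; apply/subsetP=> l; rewrite !inE => /andP[/orP[//|/imsetP[a _ ->]]].
- case/imsetP: Cm => x _ ->.
  apply: leq_trans (_ : #|[set ((x.1.1, x.1.2), false); ((x.1.1, x.2), false)]| <= 2).
    by apply: subset_leq_card; apply/subsetP=> l; rewrite inE => /andP[].
  by rewrite cards2; case: (_ != _).
Qed.

Definition lpig (l : lit V) : 'I_k.+2 :=
  match l.1.2 with inr (x, _) => odflt ord0 [pick q | pig q == x] | inl _ => ord0 end.

Lemma alpha_H1 C : C \in MAP1_cnf k.+2 -> exists O : {set 'I_k.+2}, #|O| <= 2 /\
  forall (g : cfg) h p, injective g -> p \notin codom g -> ~~ sat (alpha g h) C -> p \in O.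
Proof.
move=> CPhi.
exists [set p | [exists t : 'I_T.+1, ((t, inr (visited (pig p))), false) \in C]]; split.
  apply: leq_trans (neg_lits CPhi); apply: leq_trans (leq_imset_card lpig _).
  apply: subset_leq_card; apply/subsetP=> p; rewrite inE => /existsP[t lC].
  apply/imsetP; exists ((t, inr (visited (pig p))), false); first by rewrite inE lC.
  rewrite /lpig /=; case: pickP => [q /eqP /pig_inj -> //|none].
  by move: (none p); rewrite eqxx.
move=> g h p ig pg ns; apply: contraT => pO.
have nsb : ~~ sat (beta g) C.
  apply/negP=> /existsP[[[t a] b] /andP[lC /eqP bl]].
  case E: (alpha g h (t, a) == b).
    by move/negP: ns; apply; apply/existsP; exists ((t, a), b); rewrite lC E.
  move: E bl; rewrite /alpha /beta /=; case: a lC => [m|[x c]] lC /=.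
  - by move=> /eqP E bl; apply: E.
  - case: c lC => lC /=.
      by move=> E bl; rewrite -bl eqxx in E.
    rewrite /vis; case vb: (visB g x t) => /=.
      by move=> E bl; rewrite -bl eqxx in E.
    move=> E bl; subst b; move: E; rewrite eqbF_neg => /negbFE /existsP[p' /and3P[p'g /eqP xe _]].
    have pp : p' = p by apply/eqP; apply: contraT => ne; move: (missing_unique ig pg ne); rewrite (negbTE p'g).
    by move/negP: pO; apply; rewrite inE; apply/existsP; exists t; rewrite -pp -xe.
have := beta_clauses ig pg CPhi nsb => litC.
case/negP: ns; apply/existsP; exists ((ord_max, inr (visited (pig p))), true).
rewrite litC /alpha /= vis_pig // fpos_miss //; have := ltn_ord h; lia.
Qed.

Lemma map_lb' pi : 13 <= k.+2 -> refutation (MAP1_cnf k.+2) pi ->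
  36 ^ (k.+2)./2 <= 35 ^ (k.+2)./2 * size pi.
Proof.
move=> hk ref.
have L0 := @abstract_lb V k.+1 alpha (MAP1_cnf k.+2).
have L1 := L0 alpha_H1.
have L2 := L1 alpha_H2.
have L3 := L2 pi.
have L4 := L3 hk.
have L5 := L4 ref.
exact L5.
Qed.
End MAPinst.

Lemma bern a e : a ^ e * (a + e) <= a * (a + 1) ^ e.
Proof.
elim: e => [|e IH]; first by rewrite !expn0 addn0 mul1n muln1.
rewrite !expnS; have := leq_mul (leqnn (a + 1)) IH.
move: (a ^ e) ((a + 1) ^ e) => X Y h; nia.
Qed.

Lemma bern2 a : 0 < a -> 2 * a ^ a <= (a + 1) ^ a.
Proof.
move=> a0; have := bern a a; rewrite -(leq_pmul2l a0).
move: (a ^ a) ((a + 1) ^ a) => X Y h; nia.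
Qed.

Lemma bern35 : 2 * 35 ^ 35 <= 36 ^ 35.
Proof. exact: (@bern2 35 isT). Qed.

Lemma exp_mono a b e : a <= b -> a ^ e <= b ^ e.
Proof. by move=> ab; elim: e => // e IH; rewrite !expnS leq_mul. Qed.

Lemma final_gen a r s : 0 < a -> (a + 1) ^ r <= a ^ r * s -> 2 ^ r <= s ^ a.
Proof.
move=> a0 h.
have e1 : ((a + 1) ^ r) ^ a <= (a ^ r * s) ^ a := exp_mono a h.
have e2 : (2 * a ^ a) ^ r <= ((a + 1) ^ a) ^ r := exp_mono r (bern2 a0).
rewrite expnMn in e1; rewrite expnMn in e2.
rewrite (expnAC (a + 1) a r) (expnAC a a r) in e2.
have Z0 : 0 < (a ^ r) ^ a by rewrite !expn_gt0 a0.
move: e1 e2 Z0; move: ((a ^ r) ^ a) (((a + 1) ^ r) ^ a) (2 ^ r) (s ^ a) => Z U x y e1 e2 Z0.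
rewrite -(leq_pmul2r Z0); nia.
Qed.

Lemma final_arith r s n : 36 ^ r <= 35 ^ r * s -> n <= 2 * r + 1 -> 0 < s ->
  2 ^ n <= 2 ^ 12 * s ^ (2 ^ 12).
Proof.
move=> h nr s0.
have h1 : 2 ^ r <= s ^ 35 := @final_gen 35 r s isT h.
have h2 : 2 ^ n <= 2 * s ^ 70.
  apply: leq_trans (leq_pexp2l (isT : 0 < 2) nr) _.
  rewrite expnD expn1 mulnC leq_mul2l /= mulnC expnM (_ : 70 = 35 * 2) // expnM.
  exact: exp_mono.
have h3 : s ^ 70 <= s ^ (2 ^ 12) := leq_pexp2l s0 (isT : 70 <= 2 ^ 12).
apply: leq_trans h2 _; exact: leq_mul.
Qed.

Theorem theorem6 :
  exists c : nat, 0 < c /\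
    forall n : nat, 2 <= n ->
    forall pi : seq (clause (pvar (fact n) (move n) (2 * n - 2))),
      refutation (MAP1_cnf n) pi -> 2 ^ n <= c * (size pi) ^ c.
Proof.
exists (2 ^ 12); split; first by rewrite expn_gt0.
case=> [|[|k]] // _ pi ref.
have s0 : 0 < size pi by case/and3P: ref; case: pi.
case: (leqP 13 k.+2) => hk.
- have lb := map_lb' hk ref.
  apply: final_arith lb _ s0; lia.
- apply: (@leq_trans (2 ^ 12)).
  + by rewrite leq_exp2l //; lia.
  + by rewrite -{1}(muln1 (2 ^ 12)) leq_mul2l expn_gt0 s0 orbT.
Qed.
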